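(* Let $A(x)$ and $B(x)\neq 0$ be rational functions with real coefficients. Suppose all solutions of the ordinary differential equation $$f(x)A(x)+f'(x)B(x)=1$$ are algebraic functions. Then the general solution of this equation can be written as $$f(x)=r(x)+\sigma q^{1/N}(x),\qquad \sigma\in\mathbb{R},$$ where $N\in\mathbb{N}$ and $r(x),q(x)$ are rational functions (independent of $\sigma$). *)

(* Defs.v *)
From HB Require Import structures.
From mathcomp Require Import all_boot all_order all_algebra.
From mathcomp Require Import all_classical all_reals topology normedtype derive.
Set Implicit Arguments. Unset Strict Implicit. Unset Printing Implicit Defensive.
Import Order.TTheory GRing.Theory Num.Theory.
Import numFieldNormedType.Exports.
Local Open Scope ring_scope.

(* A real rational function is represented as a pair (numerator, denominator)
   of real polynomials; [ratev] evaluates it (denominator assumed nonzero). *)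
Definition ratev (R : realType) (p q : {poly R}) (x : R) : R := p.[x] / q.[x].

(* An admissible interval for the ODE  f A + f' B = 1  with A = a1/a2,
   B = b1/b2: a nonempty open interval ]u,v[ on which a2, b1, b2 do not vanish
   (so A, B are defined and the equation is regular there). *)
Definition admissible (R : realType) (a2 b1 b2 : {poly R}) (u v : R) : Prop :=
  u < v /\ forall x, u < x < v -> [/\ a2.[x] != 0, b1.[x] != 0 & b2.[x] != 0].

Definition is_solution (R : realType) (a1 a2 b1 b2 : {poly R}) (u v : R)
    (f : R -> R) : Prop :=
  forall x, u < x < v ->
    derivable f x 1 /\ f x * ratev a1 a2 x + derive1 f x * ratev b1 b2 x = 1.

Definition algebraic_on (R : realType) (u v : R) (f : R -> R) : Prop :=
  exists P : {poly {poly R}}, P != 0 /\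
    forall x, u < x < v -> \sum_(i < size P) (P`_i).[x] * f x ^+ i = 0.

(* Main.v *)
Require Import Defs.
From HB Require Import structures.
From mathcomp Require Import all_boot all_order all_algebra.
From mathcomp Require Import all_classical all_reals topology normedtype derive.
From mathcomp Require Import realfun exp.
From mathcomp Require Import ring lra zify.
Import Order.TTheory GRing.Theory Num.Theory.
Import numFieldNormedType.Exports.
Local Open Scope ring_scope.
Set Implicit Arguments. Unset Strict Implicit. Unset Printing Implicit Defensive.

Section S.
Variable R : realType.

Lemma poly_itv0 (p : {poly R}) (u v : R) : u < v ->
  (forall x, u < x < v -> p.[x] = 0) -> p = 0.
Proof.
move=> uv H.
apply: (@roots_geq_poly_eq0 _ p [seq u + (v - u) / (i.+2)%:R | i <- iota 0 (size p)]).
- apply/allP => _ /mapP [i _ ->]; apply/eqP/H.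
  have k2 : (2 : R) <= (i.+2)%:R by rewrite ler_nat.
  have k0 : (0 : R) < (i.+2)%:R by rewrite ltr0n.
  have h1 : 0 < (v - u) / (i.+2)%:R by rewrite divr_gt0 // subr_gt0.
  have h2 : (v - u) / (i.+2)%:R < v - u.
    rewrite ltr_pdivrMr // ltr_pMr ?subr_gt0 // ltr1n.
    by [].
  move: h1 h2; set t := (v - u) / _ => h1 h2; apply/andP; split; lra.
- rewrite map_inj_uniq ?iota_uniq // => i j /addrI /mulfI.
  have : v - u != 0 by rewrite subr_eq0 gt_eqF.
  move=> nz /(_ nz) /invr_inj /eqP; rewrite eqr_nat => /eqP [].
  done.
- by rewrite size_map size_iota.
Qed.

Lemma dvd_deriv_root (p b c : {poly R}) (a : R) : p != 0 -> root p a ->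
  p %| b * p^`() * c -> b.[a] * c.[a] = 0.
Proof.
move=> p0 ra.
case: (multiplicity_XsubC p a) => m [q nq ep].
rewrite p0 /= in nq.
case: m ep => [|n] ep.
  by move: ra; rewrite ep expr0 mulr1 (negbTE nq).
set X := ('X - a%:P) in ep.
have e1 : p = (q * X) * X ^+ n by rewrite ep exprS; ring.
have e2 : b * p^`() * c = (b * c * (q^`() * X + q *+ n.+1)) * X ^+ n.
  rewrite ep derivM deriv_exp derivXsubC /= -/X exprS; ring.
rewrite e2 e1 dvdp_mul2r; last by rewrite expf_neq0 // polyXsubC_eq0.
move=> /(dvdp_trans (dvdp_mull q (dvdpp X))).
rewrite dvdp_XsubCl /root !hornerE /= subrr mulr0 add0r.
rewrite mulf_eq0 => /orP [/eqP //|].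
by rewrite hornerMn mulrn_eq0 /= -/(root q a) (negbTE nq).
Qed.

Definition Hp (be c e a b : {poly R}) :=
  be * (a^`() * b - a * b^`()) + c * a * b + e * b ^+ 2.

Lemma Hp_scale be c e a b g : Hp be c e (a * g) (b * g) = g ^+ 2 * Hp be c e a b.
Proof. rewrite /Hp !derivM; ring. Qed.

Lemma Hp_reduce be c e a b : b != 0 -> Hp be c e a b = 0 ->
  exists a' b', [/\ coprimep a' b', b' != 0, (a != 0 -> a' != 0) &
     Hp be c e a' b' = 0].
Proof.
move=> b0 H; set g := gcdp a b.
have g0 : g != 0 by rewrite gcdp_eq0 negb_and b0 orbT.
have ea : a = a %/ g * g by rewrite divpK // dvdp_gcdl.
have eb : b = b %/ g * g by rewrite divpK // dvdp_gcdr.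
exists (a %/ g), (b %/ g); split.
- by apply: coprimep_div_gcd; rewrite b0 orbT.
- by apply: contra b0 => /eqP E; rewrite eb E mul0r.
- by move=> a0; apply: contra a0 => /eqP E; rewrite ea E mul0r.
- move: H; rewrite {1}ea {1}eb Hp_scale => /eqP.
  by rewrite mulf_eq0 expf_eq0 (negbTE g0) andbF /= => /eqP.
Qed.

Lemma Hp_pole be c e a b x : coprimep a b -> b != 0 -> Hp be c e a b = 0 ->
  b.[x] = 0 -> be.[x] = 0.
Proof.
move=> cop b0 H bx.
have hd : b %| be * b^`() * a.
  have -> : be * b^`() * a = b * (be * a^`() + c * a + e * b).
    by apply/eqP; rewrite -subr_eq0; rewrite -oppr_eq0 -H /Hp; apply/eqP; ring.
  exact: dvdp_mulIl.
have := dvd_deriv_root b0 (introT eqP bx) hd.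
move/eqP; rewrite mulf_eq0 => /orP [/eqP //|ax].
have := coprimep_root (etrans (coprimep_sym b a) cop) (introT eqP bx).
by rewrite ax.
Qed.

Lemma Hp_zero be c a b x : coprimep a b -> a != 0 -> Hp be c 0 a b = 0 ->
  a.[x] = 0 -> be.[x] = 0.
Proof.
move=> cop a0 H ax.
have hd : a %| be * a^`() * b.
  have -> : be * a^`() * b = a * (be * b^`() - c * b).
    by apply/eqP; rewrite -subr_eq0 -H /Hp; apply/eqP; ring.
  exact: dvdp_mulIl.
have := dvd_deriv_root a0 (introT eqP ax) hd.
move/eqP; rewrite mulf_eq0 => /orP [/eqP //|bx].
have := coprimep_root cop (introT eqP ax).
by rewrite bx.
Qed.
End S.

Section S2.
Variable R : realType.
Implicit Types (P Q : {poly {poly R}}) (c : {poly R}).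

Definition EV (x y : R) P : R := (map_poly (horner_eval x) P).[y].
Definition Px P : {poly {poly R}} := map_poly (@deriv R) P.

Lemma EVD x y P Q : EV x y (P + Q) = EV x y P + EV x y Q.
Proof. by rewrite /EV rmorphD hornerD. Qed.
Lemma EVB x y P Q : EV x y (P - Q) = EV x y P - EV x y Q.
Proof. by rewrite /EV rmorphB hornerD hornerN. Qed.
Lemma EVM x y P Q : EV x y (P * Q) = EV x y P * EV x y Q.
Proof. by rewrite /EV rmorphM hornerM. Qed.
Lemma EVC x y c : EV x y c%:P = c.[x].
Proof. by rewrite /EV map_polyC hornerC. Qed.
Lemma EVX x y : EV x y 'X = y.
Proof. by rewrite /EV map_polyX hornerX. Qed.
Lemma EV0 x y : EV x y 0 = 0.
Proof. by rewrite /EV map_poly0 horner0. Qed.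

Lemma EV_sum x y P : EV x y P = \sum_(i < size P) (P`_i).[x] * y ^+ i.
Proof.
rewrite /EV (@horner_coef_wide _ (size P)); last exact: size_poly.
by apply: eq_bigr => i _; rewrite coef_map_id0 // horner_evalE horner0.
Qed.

Lemma Px_MXaddC P c : Px (P * 'X + c%:P) = Px P * 'X + (c^`())%:P.
Proof.
apply/polyP => i; rewrite /Px coefD coef_map_id0 ?deriv0 // coefD !coefMX !coefC.
case: i => [|i] /=; first by rewrite !add0r.
by rewrite !addr0 coef_map_id0 ?deriv0.
Qed.

Lemma EV_derive P (x : R) (phi : R -> R) (dphi : R) : is_derive x (1:R) phi dphi ->
  is_derive x (1:R) (fun t => EV t (phi t) P)
     (EV x (phi x) (Px P) + EV x (phi x) P^`() * dphi).
Proof.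
move=> hphi; elim/poly_ind: P => [|Q c IH].
  rewrite /Px map_poly0 deriv0 !EV0 mul0r addr0.
  have -> : (fun t => EV t (phi t) 0) = cst 0 by apply/funext => t; rewrite EV0.
  exact: is_derive_cst.
have -> : (fun t => EV t (phi t) (Q * 'X + c%:P)) =
    (fun t => EV t (phi t) Q) * phi + horner c.
  by apply/funext => t; rewrite EVD EVM EVX EVC.
apply: is_derive_eq.
rewrite Px_MXaddC derivMXaddC !(EVD, EVM, EVX, EVC) /GRing.scale /=.
ring.
Qed.

End S2.

Lemma size_CM (K : nzRingType) (c : K) (p : {poly K}) : (size (c%:P * p)%R <= size p)%N.
Proof.
apply: leq_trans (size_polyMleq _ _) _.
have := size_polyC_leq1 c; lia.
Qed.

Lemma size_deriv_le (K : nzRingType) (p : {poly K}) : (size p^`() <= (size p).-1)%N.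
Proof. exact: size_poly. Qed.

Section MinPoly.
Variable R : realType.
Variables (u v : R) (phi dphi : R -> R) (be c0 c1 : {poly R}).
Hypothesis hder : forall x, u < x < v -> is_derive x (1:R) phi (dphi x).
Hypothesis hode : forall x, u < x < v ->
  be.[x] * dphi x = c0.[x] + c1.[x] * phi x.

Definition vanish (P : {poly {poly R}}) :=
  forall x, u < x < v -> EV x (phi x) P = 0.
Definition QQ (P : {poly {poly R}}) : {poly {poly R}} :=
  be%:P * Px P + c0%:P * P^`() + c1%:P * (P^`() * 'X).
Definition TT (P : {poly {poly R}}) : {poly {poly R}} :=
  (lead_coef P)%:P * QQ P - ((QQ P)`_(size P).-1)%:P * P.

Lemma near_itv (x : R) : u < x < v -> \forall t \near x, u < t < v.
Proof.
move=> /andP [ux xv]; near=> t; apply/andP; split; near: t.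
- exact: lt_nbhsr.
- exact: lt_nbhsl.
Unshelve. all: by end_near. Qed.

Lemma QQ_vanish P : vanish P -> vanish (QQ P).
Proof.
move=> vP x hx.
have hD := EV_derive P (hder hx).
set D := (EV x (phi x) (Px P) + _) in hD.
have hz : is_derive x (1:R) (cst (0:R)) D.
  apply: near_eq_is_derive hD.
  move: (near_itv hx); apply: filterS => t ht.
  by rewrite /cst vP.
have D0 : D = 0.
  by rewrite -(@derive_val _ _ _ _ _ _ _ hz) derive_cst.
rewrite /QQ !(EVD, EVM, EVC, EVX).
move: D0; rewrite /D => D0.
transitivity (be.[x] * (EV x (phi x) (Px P) + EV x (phi x) P^`() * dphi x)
  + EV x (phi x) P^`() * (c0.[x] + c1.[x] * phi x - be.[x] * dphi x)).
  ring.
by rewrite D0 hode // subrr !mulr0 addr0.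
Qed.

Lemma size_QQ P : (size (QQ P) <= size P)%N.
Proof.
rewrite /QQ; apply: leq_trans (size_polyD _ _) _.
rewrite geq_max; apply/andP; split.
  apply: leq_trans (size_polyD _ _) _.
  rewrite geq_max; apply/andP; split.
    apply: leq_trans (size_CM _ _) _; exact: size_poly.
  apply: leq_trans (size_CM _ _) _.
  apply: leq_trans (size_deriv_le _) _; exact: leq_pred.
apply: leq_trans (size_CM _ _) _.
have [->|d0] := eqVneq (P^`()) 0; first by rewrite mul0r size_poly0.
rewrite size_mulX //.
have := size_deriv_le P; have := size_poly_gt0 (P^`()); rewrite d0 => h1; case: (size P) => [|k] /= h2; last by rewrite ltnS.
by rewrite leqn0 in h2; rewrite (eqP h2) in h1.
Qed.

Lemma coef_QQ P k : (QQ P)`_k =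
  be * (P`_k)^`() + c0 * (P`_k.+1 *+ k.+1) + c1 * (P`_k *+ k).
Proof.
rewrite /QQ !coefD !coefCM coef_map_id0 ?deriv0 // coef_deriv coefMX.
by case: k => [|k] /=; rewrite ?mulr0n ?coef_deriv.
Qed.

Lemma TT_vanish P : vanish P -> vanish (TT P).
Proof.
move=> vP x hx; rewrite /TT EVB !EVM !EVC vP // QQ_vanish //.
by rewrite !mulr0 subr0.
Qed.

Lemma size_TT P : P != 0 -> (size (TT P) < size P)%N.
Proof.
move=> P0; have sP := polySpred P0; move: sP; set m := (size P).-1 => sP.
have h1 : (size (TT P) <= m.+1)%N.
  rewrite /TT; apply: leq_trans (size_polyD _ _) _; rewrite size_polyN geq_max.
  apply/andP; split; rewrite -sP.
    apply: leq_trans (size_CM _ _) _; exact: size_QQ.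
  exact: size_CM.
have h2 : (TT P)`_m = 0.
  by rewrite /TT coefB !coefCM lead_coefE -/m mulrC subrr.
rewrite sP ltnS; apply/leq_sizeP => j hj.
move: hj; rewrite leq_eqVlt => /orP [/eqP <- //|hj].
by move/leq_sizeP: h1; apply.
Qed.

Lemma min_poly (b : bool) : (b -> forall x, u < x < v -> phi x != 0) ->
  forall P, P != 0 -> vanish P ->
  exists P', [/\ P' != 0, vanish P', TT P' = 0 & (b -> P'`_0 != 0)].
Proof.
move=> hb P; have [n szP] := ubnP (size P).
elim: n P szP => // n IH P szP P0 vP.
case hb0: (b && (P`_0 == 0)).
  move/andP: hb0 => [bb /eqP p0].
  set S := drop_poly 1 P.
  have eP : P = S * 'X.
    rewrite -{1}(poly_take_drop 1 P) -/S expr1.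
    suff -> : take_poly 1 P = 0 by rewrite add0r.
    apply/polyP => i; rewrite coef_take_poly coef0.
    by case: i => [|i] //=.
  have S0 : S != 0 by apply: contra P0 => /eqP S0; rewrite eP S0 mul0r.
  apply: (IH S) => //.
    have : size S = (size P - 1)%N by rewrite size_drop_poly.
    have := size_poly_gt0 P; rewrite P0; lia.
  move=> x hx; have := vP x hx; rewrite {1}eP EVM EVX => /eqP.
  by rewrite mulf_eq0 (negbTE (hb bb x hx)) orbF => /eqP.
case T0: (TT P == 0).
  exists P; split => //; first by apply/eqP.
  by move=> bb; move: hb0; rewrite bb /= => ->.
apply: (IH (TT P)) => //.
- have := size_TT P0; lia.
- by rewrite T0.
- exact: TT_vanish.
Qed.

End MinPoly.

Section Aux.
Variable R : realType.

Lemma cst_itv (u v : R) (F : R -> R) :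
  (forall x, u < x < v -> is_derive x (1:R) F 0) ->
  forall x y, u < x < v -> u < y < v -> F x = F y.
Proof.
move=> hF x y.
wlog xy : x y / x <= y.
  move=> H hx hy; case: (leP x y) => [/H|/ltW /H]; first by apply.
  by move=> h; apply/esym/h.
move=> /andP [ux xv] /andP [uy yv].
have [||c _] := @MVT_segment R F (fun _ => 0) x y xy.
- move=> z; rewrite in_itv /= => /andP [xz zy]; apply: hF.
  by apply/andP; split; [apply: lt_trans xz|apply: lt_trans yv].
- apply: derivable_within_continuous => z; rewrite in_itv /= => /andP [xz zy].
  have : u < z < v by apply/andP; split; [apply: lt_le_trans xz|apply: le_lt_trans yv].
  by move/hF => [].
by rewrite mul0r => /eqP; rewrite subr_eq0 => /eqP.
Qed.

Lemma deriv_cont (f : R -> R) (x : R) : derivable f x 1 -> {for x, continuous f}.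
Proof. by move=> h; apply/differentiable_continuous/derivable1_diffP. Qed.

Lemma alg_EV (u v : R) f : algebraic_on u v f ->
  exists P, P != 0 /\ forall x, u < x < v -> EV x (f x) P = 0.
Proof.
case=> P [P0 hP]; exists P; split => // x hx; rewrite EV_sum; exact: hP.
Qed.

Lemma size_ge2 (u v : R) (phi : R -> R) (P : {poly {poly R}}) : u < v -> P != 0 ->
  (forall x, u < x < v -> EV x (phi x) P = 0) -> (1 < size P)%N.
Proof.
move=> uv P0 hP; rewrite ltnNge; apply/negP => s1.
have eP := size1_polyC s1.
have : P`_0 = 0.
  apply: (poly_itv0 uv) => x hx; have := hP x hx; by rewrite {1}eP EVC.
by move=> e0; move: P0; rewrite eP e0 eqxx.
Qed.

Variables (a1 a2 b1 b2 : {poly R}).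

Lemma sol_ode u v f : admissible a2 b1 b2 u v -> is_solution a1 a2 b1 b2 u v f ->
  forall x, u < x < v -> is_derive x (1:R) f (derive1 f x) /\
   (a2 * b1).[x] * derive1 f x = (a2 * b2).[x] + (- (a1 * b2)).[x] * f x.
Proof.
move=> [uv adm] sol x hx; have [da2 db1 db2] := adm x hx.
have [df E] := sol x hx; split.
  by rewrite derive1E; apply: derivableP.
move: E; rewrite /ratev => E; rewrite !hornerE.
transitivity (a2.[x] * b2.[x] * (f x * (a1.[x] / a2.[x]) + derive1 f x * (b1.[x] / b2.[x]))
   - a1.[x] * b2.[x] * f x).
  by field; apply/andP; split.
by rewrite E mulr1; ring.
Qed.

End Aux.

Lemma eq0_from (K : comRingType) (x y c : K) : y = 0 -> x = c * y -> x = 0.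
Proof. by move=> -> ->; rewrite mulr0. Qed.

Section Main.
Variable R : realType.
Variables a1 a2 b1 b2 : {poly R}.
Hypothesis halg : forall (u v : R) (f : R -> R), admissible a2 b1 b2 u v ->
            is_solution a1 a2 b1 b2 u v f -> algebraic_on u v f.
Local Notation al := (a1 * b2).
Local Notation be := (a2 * b1).
Local Notation ga := (a2 * b2).

Lemma adm_be u v x : admissible a2 b1 b2 u v -> u < x < v -> be.[x] != 0.
Proof. by move=> [_ h] /h [h1 h2 _]; rewrite hornerM mulf_neq0. Qed.

Lemma step1 u v f : admissible a2 b1 b2 u v -> is_solution a1 a2 b1 b2 u v f ->
  exists r1 r2, [/\ coprimep r1 r2, r2 != 0 & Hp be al (-ga) r1 r2 = 0].
Proof.
move=> adm sol.
have [P0 [P00 vP0]] := alg_EV (halg adm sol).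
have uv := adm.1.
have hder x (hx : u < x < v) := (sol_ode adm sol hx).1.
have hode x (hx : u < x < v) := (sol_ode adm sol hx).2.
have [P [Pn0 vP TP _]] := @min_poly R u v f (derive1 f) be ga (-al) hder hode false
   (fun b => False_ind _ (notF b)) P0 P00 vP0.
have s2 := size_ge2 uv Pn0 vP.
have [n sP] : exists n, size P = n.+2.
  by move: s2; case: (size P) => [|[|k]] // _; exists k.
have : (TT be ga (-al) P)`_n = 0 by rewrite TP coef0.
rewrite /TT coefB !coefCM !coef_QQ sP /= lead_coefE sP /=.
rewrite [P`_n.+2]nth_default ?sP // => E.
have hn : (n.+1)%:R != 0 :> {poly R} by rewrite -polyC_natr polyC_eq0 pnatr_eq0.
have hp : P`_n.+1 != 0 by move: Pn0; rewrite -lead_coef_eq0 lead_coefE sP.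
have r20 : P`_n.+1 *+ n.+1 != 0 by rewrite -mulr_natr; exact: mulf_neq0 hp hn.
have H : Hp be al (-ga) (- P`_n) (P`_n.+1 *+ n.+1) = 0.
  apply: (@eq0_from _ _ _ (- (n.+1)%:R) E).
  rewrite /Hp derivN derivMn.
  ring.
have [r1 [r2 [c1 c2 _ c3]]] := Hp_reduce r20 H.
by exists r1, r2.
Qed.

End Main.

Lemma eq_from_neg (K : zmodType) (x y z : K) : z = 0 -> x - y = - z -> x = y.
Proof. by move=> -> /eqP; rewrite oppr0 subr_eq0 => /eqP. Qed.

Lemma scale_alg (R : realType) (P1 : {poly {poly R}}) (s : {poly R}) :
  let P2 := \poly_(i < size P1) (P1`_i * s ^+ ((size P1).-1 - i)) in
  (forall x y, EV x (s.[x] * y) P2 = s.[x] ^+ (size P1).-1 * EV x y P1) /\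
  (P1 != 0 -> s != 0 -> P2 != 0).
Proof.
move=> P2; split.
  move=> x y; rewrite [EV x y P1]EV_sum /EV (@horner_coef_wide _ (size P1) (map_poly _ P2)); last first.
    have h1 : (size (map_poly (horner_eval x) P2) <= size P2)%N by exact: size_poly.
    by apply: leq_trans h1 _; rewrite /P2; exact: size_poly.
  rewrite /P2.
  rewrite mulr_sumr; apply: eq_bigr => i _.
  rewrite !coef_map_id0 ?horner_evalE ?horner0 //.
  rewrite coef_poly ltn_ord.
  have e : s.[x] ^+ ((size P1).-1 - i) * s.[x] ^+ i = s.[x] ^+ (size P1).-1.
    by rewrite -exprD subnK //; have := ltn_ord i; lia.
  by rewrite hornerM horner_exp exprMn -e; ring.
move=> P10 s0; apply/eqP => /(congr1 (fun Q : {poly {poly R}} => Q`_(size P1).-1)).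
rewrite coef_poly coef0 prednK ?size_poly_gt0 // leqnn subnn expr0 mulr1 => /eqP.
by rewrite -lead_coefE lead_coef_eq0 (negbTE P10).
Qed.

Lemma EV_comp (R : realType) (P : {poly {poly R}}) (r : {poly R}) x z :
  EV x z (P \Po ('X + r%:P)) = EV x (z + r.[x]) P.
Proof.
by rewrite /EV map_comp_poly horner_comp rmorphD /= map_polyX map_polyC hornerD hornerX hornerC.
Qed.

Section Main2.
Variable R : realType.
Variables a1 a2 b1 b2 : {poly R}.
Hypothesis halg : forall (u v : R) (f : R -> R), admissible a2 b1 b2 u v ->
            is_solution a1 a2 b1 b2 u v f -> algebraic_on u v f.
Local Notation al := (a1 * b2).
Local Notation be := (a2 * b1).
Local Notation ga := (a2 * b2).

Variables r1 r2 : {poly R}.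
Hypotheses (cop : coprimep r1 r2) (r20 : r2 != 0) (Hr : Hp be al (-ga) r1 r2 = 0).

Lemma r2_nz u v x : admissible a2 b1 b2 u v -> u < x < v -> r2.[x] != 0.
Proof.
move=> adm hx; apply/eqP => h; have := Hp_pole cop r20 Hr h.
by move/eqP; rewrite (negbTE (adm_be adm hx)).
Qed.

Definition psi (f : R -> R) (t : R) := r2.[t] * f t - r1.[t].
Definition dpsi (f : R -> R) (t : R) :=
  r2^`().[t] * f t + r2.[t] * derive1 f t - r1^`().[t].
Local Notation chat := (be * r2^`() - al * r2).

Lemma psi_ode u v f : admissible a2 b1 b2 u v -> is_solution a1 a2 b1 b2 u v f ->
  forall x, u < x < v -> is_derive x (1:R) (psi f) (dpsi f x) /\
   (r2 * be).[x] * dpsi f x = (0 : {poly R}).[x] + chat.[x] * psi f x.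
Proof.
move=> adm sol x hx; have [hf E] := sol_ode adm sol hx; split.
  have -> : psi f = horner r2 * f - horner r1 by apply/funext => t.
  apply: (is_derive_eq (is_deriveB (is_deriveM (is_derive_poly r2 x) hf) (is_derive_poly r1 x))).
  rewrite /dpsi /GRing.scale /=; ring.
have Hx : (Hp be al (-ga) r1 r2).[x] = 0 by rewrite Hr horner0.
move: Hx E; rewrite /Hp /psi /dpsi !(hornerD, hornerN, hornerM, horner_exp) => Hx E.
have Ega : a2.[x] * b2.[x] = a2.[x] * b1.[x] * derive1 f x + a1.[x] * b2.[x] * f x.
  by rewrite E; ring.
rewrite Ega in Hx.
apply: (eq_from_neg Hx); rewrite horner0; ring.
Qed.

Lemma step2 u v f x1 : admissible a2 b1 b2 u v -> is_solution a1 a2 b1 b2 u v f ->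
  u < x1 < v -> psi f x1 != 0 ->
  exists d q1 q2, [/\ (0 < d)%N, coprimep q1 q2, q1 != 0, q2 != 0 &
     Hp (r2 * be) (- (chat *+ d)) 0 q1 q2 = 0].
Proof.
move=> adm sol hx1 px1.
have hode x (hx : u < x < v) := (psi_ode adm sol hx).2.
have hder x (hx : u < x < v) := (psi_ode adm sol hx).1.
have cont : {for x1, continuous (psi f)}.
  by apply: deriv_cont; case: (hder x1 hx1).
have hn : \forall t \near x1, psi f t != 0 by apply: (cvgr_neq0 _ cont).

have hb : \forall t \near x1, (u < t < v) /\ psi f t != 0.
  by near=> t; split; near: t; [exact: near_itv|exact: hn].
case/nbhs_ballP: hb => e /= e0 he.
have hJ t : x1 - e < t < x1 + e -> (u < t < v) /\ psi f t != 0.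
  by move=> ht; apply: he; rewrite -ball_normE /= ltr_distlC.
have Je : x1 - e < x1 + e by lra.
have [P1 [P10 vP1]] := alg_EV (halg adm sol).
have [eP2 nP2] := scale_alg P1 r2.
set P2 := \poly_(i < size P1) _ in eP2 nP2.
set P3 := P2 \Po ('X + r1%:P).
have P30 : P3 != 0 by rewrite comp_poly2_eq0 ?size_XaddC // nP2.
have vP3 : forall x, x1 - e < x < x1 + e -> EV x (psi f x) P3 = 0.
  move=> x hx; have [hxI _] := hJ x hx.
  by rewrite /P3 EV_comp /psi subrK eP2 vP1 // mulr0.
have [P [Pn0 vP TP P0]] := @min_poly R (x1 - e) (x1 + e) (psi f) (dpsi f) (r2 * be) 0 chat
   (fun x hx => hder x (hJ x hx).1) (fun x hx => hode x (hJ x hx).1) true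
   (fun _ x hx => (hJ x hx).2) P3 P30 vP3.
have s2 := size_ge2 Je Pn0 vP.
have [m sP] : exists m, size P = m.+2.
  by move: s2; case: (size P) => [|[|k]] // _; exists k.
have : (TT (r2 * be) 0 chat P)`_0 = 0 by rewrite TP coef0.
rewrite /TT coefB !coefCM !coef_QQ sP /= lead_coefE sP /= => E.
have hp : P`_m.+1 != 0 by move: Pn0; rewrite -lead_coef_eq0 lead_coefE sP.
have H : Hp (r2 * be) (- (chat *+ m.+1)) 0 P`_0 P`_m.+1 = 0.
  apply: (@eq0_from _ _ _ 1 E).
  rewrite /Hp; ring.
have [q1 [q2 [c1 c2 c3 c4]]] := Hp_reduce hp H.
exists m.+1, q1, q2; split => //.
exact: c3 (P0 isT).
Unshelve. all: by end_near.
Qed.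

End Main2.

Lemma powR_root (R : realType) (a : R) (n : nat) : 0 <= a -> (0 < n)%N ->
  (a `^ (n%:R^-1)) ^+ n = a.
Proof.
move=> a0 n0.
rewrite -powR_mulrn ?powR_ge0 // -powRrM mulVf ?powRr1 //.
by rewrite pnatr_eq0 -lt0n.
Qed.

Lemma lin0 (K : comRingType) (x a b c1 c2 : K) :
  a = 0 -> b = 0 -> x = c1 * a + c2 * b -> x = 0.
Proof. by move=> -> -> ->; rewrite !mulr0 addr0. Qed.

Section Final.
Variable R : realType.
Variables a1 a2 b1 b2 : {poly R}.
Local Notation al := (a1 * b2).
Local Notation be := (a2 * b1).
Local Notation ga := (a2 * b2).
Variables r1 r2 : {poly R}.
Hypotheses (cop : coprimep r1 r2) (r20 : r2 != 0) (Hr : Hp be al (-ga) r1 r2 = 0).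
Local Notation chat := (be * r2^`() - al * r2).
Variables (k : nat) (q1 q2 : {poly R}).
Hypotheses (copq : coprimep q1 q2) (q10 : q1 != 0) (q20 : q2 != 0)
  (Hq : Hp (r2 * be) (- (chat *+ k.+1)) 0 q1 q2 = 0).

Lemma final u v f : admissible a2 b1 b2 u v -> is_solution a1 a2 b1 b2 u v f ->
  exists (sigma : R) (g : R -> R),
    (forall x, u < x < v -> {for x, continuous g}) /\
    (forall x, u < x < v -> g x ^+ (2 * k.+1) =
        ratev (q1 ^+ 2) (q2 ^+ 2 * r2 ^+ (2 * k.+1)) x) /\
    (forall x, u < x < v -> f x = ratev r1 r2 x + sigma * g x).
Proof.
move=> adm sol.
have r2x x (hx : u < x < v) : r2.[x] != 0 := r2_nz cop r20 Hr adm hx.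
have bex x (hx : u < x < v) : (r2 * be).[x] != 0.
  by rewrite hornerM mulf_neq0 ?r2x // (adm_be adm hx).
have q2x x (hx : u < x < v) : q2.[x] != 0.
  apply/eqP => h; have := Hp_pole copq q20 Hq h; by move/eqP; rewrite (negbTE (bex x hx)).
have q1x x (hx : u < x < v) : q1.[x] != 0.
  apply/eqP => h; have := Hp_zero copq q10 Hq h; by move/eqP; rewrite (negbTE (bex x hx)).
set Phi := fun t => psi r1 r2 f t ^+ k.+1 * q2.[t] * (q1.[t])^-1.
have dPhi x : u < x < v -> is_derive x (1:R) Phi 0.
  move=> hx; have [hd ho] := psi_ode Hr adm sol hx.
  have -> : Phi = (psi r1 r2 f ^+ k.+1) * horner q2 * (fun t => (q1.[t])^-1).
    by rewrite exprfctE; apply/funext => t.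
  apply: (is_derive_eq (is_deriveM (is_deriveM (is_deriveX k.+1 hd) (is_derive_poly q2 x))
             (is_deriveV (q1x x hx) (is_derive_poly q1 x)))).
  rewrite /GRing.scale !fctE /=.
  have A : (Hp (r2 * be) (- (chat *+ k.+1)) 0 q1 q2).[x] = 0 by rewrite Hq horner0.
  move: A ho; rewrite /Hp !(hornerD, hornerN, hornerM, horner_exp, hornerMn, horner0) => A ho.
  have B := ho; move: B; rewrite add0r => /eqP; rewrite -subr_eq0 => /eqP B.
  apply: (lin0 A B (c1 := - (psi r1 r2 f x ^+ k.+1) / ((r2.[x] * (a2.[x] * b1.[x])) * q1.[x] ^+ 2))
     (c2 := q2.[x] * k.+1%:R * psi r1 r2 f x ^+ k / ((r2.[x] * (a2.[x] * b1.[x])) * q1.[x]))).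
  have := bex x hx; rewrite !hornerM => bx.
  have := q1x x hx => qx.
  rewrite -[_ *+ k.+1]mulr_natr -exprVn.
  rewrite !exprS; move: (psi r1 r2 f x ^+ k) => Pk.
  field.
  have [ha hb _] := adm.2 x hx.
  by rewrite qx ha hb (r2x x hx).
have uv := adm.1.
have x0I : u < (u + v) / 2 < v by apply/andP; split; lra.
set C := Phi ((u + v) / 2).
have hC x (hx : u < x < v) : psi r1 r2 f x ^+ k.+1 = C * q1.[x] / q2.[x].
  have e := cst_itv dPhi hx x0I; rewrite /C -e /Phi.
  have := q1x x hx; have := q2x x hx; move: (psi r1 r2 f x ^+ k.+1) => Pk qa qb.
  by field; rewrite qa qb.
have oddN : ~~ odd (2 * k.+1) by rewrite oddM.
have rpos x (hx : u < x < v) : 0 < ratev (q1 ^+ 2) (q2 ^+ 2 * r2 ^+ (2 * k.+1)) x.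
  rewrite /ratev horner_exp hornerM !horner_exp; apply: divr_gt0.
    by rewrite exprn_even_gt0 // q1x.
  by apply: mulr_gt0; rewrite exprn_even_gt0 // ?q2x ?r2x ?orbT.
have [C0|C0] := eqVneq C 0.
  exists 0, (fun x => (ratev (q1 ^+ 2) (q2 ^+ 2 * r2 ^+ (2 * k.+1)) x) `^ ((2 * k.+1)%:R^-1)).
  split; [|split].
  - move=> x hx.
    change {for x, continuous ((fun a : R => a `^ ((2 * k.+1)%:R^-1)) \o
       ratev (q1 ^+ 2) (q2 ^+ 2 * r2 ^+ (2 * k.+1)))}.
    apply: continuous_comp.
      apply: deriv_cont.
      have -> : ratev (q1 ^+ 2) (q2 ^+ 2 * r2 ^+ (2 * k.+1)) =
          horner (q1 ^+ 2) * (fun t => ((q2 ^+ 2 * r2 ^+ (2 * k.+1)).[t])^-1).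
        by apply/funext => t; rewrite /ratev.
      apply: derivableM; first exact: derivable_horner.
      apply: derivableV; last exact: derivable_horner.
      by rewrite hornerM !horner_exp mulf_neq0 // expf_neq0 // ?q2x ?r2x.
    apply: deriv_cont; apply: derivable_powR.
    by rewrite in_itv /= andbT rpos.
  - move=> x hx /=; apply: powR_root; first exact: ltW (rpos x hx).
    by rewrite muln_gt0.
  - move=> x hx; rewrite mul0r addr0.
    have : psi r1 r2 f x ^+ k.+1 = 0 by rewrite hC // C0 !mul0r.
    move/eqP; rewrite expf_eq0 /= /psi subr_eq0 => /eqP e.
    rewrite /ratev -e; have := r2x x hx; move: (f x) (r2.[x]) => y z hz.
    by field.
pose c := `|C| `^ ((k.+1)%:R^-1).
have hc : c ^+ k.+1 = `|C| by apply: powR_root.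
have c0 : c != 0 by rewrite /c powR_eq0 normr_eq0 negb_and C0.
exists c, (fun t => psi r1 r2 f t / r2.[t] / c).
split; [|split].
- move=> x hx; apply: deriv_cont.
  have [hd _] := psi_ode Hr adm sol hx.
  have -> : (fun t => psi r1 r2 f t / r2.[t] / c) =
     (psi r1 r2 f * (fun t => (r2.[t])^-1)) * cst (c^-1).
    by apply/funext => t.
  have hD := is_deriveM (is_deriveM hd (is_deriveV (r2x x hx) (is_derive_poly r2 x)))
      (is_derive_cst (c^-1) x (1:R)).
  by case: hD.
- move=> x hx; rewrite /ratev horner_exp hornerM !horner_exp !expr_div_n.
  rewrite [(2 * k.+1)%N]mulnC !exprM hC // hc real_normK ?num_real //.
  have := q2x x hx; have := q1x x hx; have := r2x x hx.
  move=> h1 h2 h3; have h4 : r2.[x] ^+ k.+1 != 0 by rewrite expf_neq0.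
  move: (r2.[x] ^+ k.+1) h4 => Rk h4.
  by field; rewrite h3 h4 C0.
- move=> x hx; rewrite /ratev /psi.
  have := r2x x hx; move: (f x) (r2.[x]) => y z hz.
  by field; rewrite hz c0.
Qed.

End Final.

Theorem lemma1 (R : realType) (a1 a2 b1 b2 : {poly R})
  (ha2 : a2 != 0) (hb2 : b2 != 0) (hB : b1 != 0)
  (halg : forall (u v : R) (f : R -> R), admissible a2 b1 b2 u v ->
            is_solution a1 a2 b1 b2 u v f -> algebraic_on u v f) :
  exists N : nat, (0 < N)%N /\
  exists r1 r2 q1 q2 : {poly R}, r2 != 0 /\ q2 != 0 /\
    forall (u v : R) (f : R -> R), admissible a2 b1 b2 u v ->
      is_solution a1 a2 b1 b2 u v f ->
      exists (sigma : R) (g : R -> R),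
        (forall x, u < x < v -> {for x, continuous g}) /\
        (forall x, u < x < v -> g x ^+ N = ratev q1 q2 x) /\
        (forall x, u < x < v -> f x = ratev r1 r2 x + sigma * g x).
Proof.
case: (pselect (exists u v f, admissible a2 b1 b2 u v /\
                  is_solution a1 a2 b1 b2 u v f)) => [[u0 [v0 [f0 [adm0 sol0]]]]|nosol];
  last first.
  exists 1%N; split => //; exists 0, 1, 1, 1; split; first exact: oner_neq0.
  split; first exact: oner_neq0.
  by move=> u v f adm sol; exfalso; apply: nosol; exists u, v, f.
have [r1 [r2 [cop r20 Hr]]] := step1 halg adm0 sol0.
case: (pselect (exists u v f x, [/\ admissible a2 b1 b2 u v,
     is_solution a1 a2 b1 b2 u v f, u < x < v & psi r1 r2 f x != 0]))
  => [[u1 [v1 [f1 [x1 [adm1 sol1 hx1 px1]]]]]|nopsi].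
  have [d [q1 [q2 [d0 copq q10 q20 Hq]]]] := step2 halg r20 Hr adm1 sol1 hx1 px1.
  case: d d0 Hq => // k _ Hq.
  exists (2 * k.+1)%N; split; first by rewrite muln_gt0.
  exists r1, r2, (q1 ^+ 2), (q2 ^+ 2 * r2 ^+ (2 * k.+1)); split => //.
  split; first by rewrite mulf_neq0 // expf_neq0.
  move=> u v f adm sol.
  exact: (final cop r20 Hr copq q10 q20 Hq adm sol).
exists 1%N; split => //; exists r1, r2, 1, 1; split => //; split; first exact: oner_neq0.
move=> u v f adm sol; exists 0, (fun _ => 1); split; [|split].
- by move=> x _; exact: cst_continuous.
- by move=> x _; rewrite expr1 /ratev hornerC divr1.
- move=> x hx; rewrite mul0r addr0.
  have p0 : psi r1 r2 f x = 0.
    have [//|h] := eqVneq (psi r1 r2 f x) 0.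
    by exfalso; apply: nopsi; exists u, v, f, x; split.
  move: p0; rewrite /psi => /eqP; rewrite subr_eq0 => /eqP e.
  rewrite /ratev -e; have := r2_nz cop r20 Hr adm hx; move: (f x) (r2.[x]) => y z hz.
  by field.
Qed.
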